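(* Let $\mathcal H$ be a complex Hilbert space, $A, B$ bounded self-adjoint operators on $\mathcal H$ and $C$ a bounded operator on $\mathcal H$. Let $M$ be a closed subspace of $\mathcal H$ invariant for $A$, $B$ and $C$, such that $\sigma(A|_{M^\perp}) \cap \sigma(B|_M) = \emptyset$ and $B|_M$ is a compact operator on $M$. If $D$ is a bounded operator on $\mathcal H$ with $AD - DB = C$, then $M$ is invariant for $D$.
   Context: $\sigma(\cdot)$ denotes the spectrum and $M^\perp$ the orthogonal complement of $M$. *)

(* Defs.v *)
From HB Require Import structures.
From mathcomp Require Import all_boot all_order all_algebra.
From mathcomp Require Import complex.
From mathcomp Require Import all_classical all_reals all_analysis.
Set Implicit Arguments. Unset Strict Implicit. Unset Printing Implicit Defensive.
Import Order.TTheory GRing.Theory Num.Theory ComplexField.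
Local Open Scope ring_scope.
Local Open Scope classical_set_scope.

Section Hilbert.
Variables (R : realType) (H : completeNormedModType R[i]).

(* ip is an inner product (linear in the first argument, conjugate symmetric)
   inducing the norm of H; together with completeness of H, (H, ip) is a
   complex Hilbert space. *)
Definition is_inner_product (ip : H -> H -> R[i]) : Prop :=
  [/\ forall (a : R[i]) (x y z : H), ip (a *: x + y) z = a * ip x z + ip y z,
      forall x y : H, ip y x = conjc (ip x y)
    & forall x : H, ip x x = `|x| ^+ 2].

Definition bounded_op (T : {linear H -> H}) : Prop := continuous T.

Definition self_adjoint (ip : H -> H -> R[i]) (T : H -> H) : Prop :=
  forall x y : H, ip (T x) y = ip x (T y).

Definition closed_subspace (M : set H) : Prop :=
  [/\ closed M, M 0,
      forall x y, M x -> M y -> M (x + y)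
    & forall (a : R[i]) x, M x -> M (a *: x)].

Definition is_invariant (M : set H) (T : H -> H) : Prop :=
  forall x, M x -> M (T x).

Definition orth (ip : H -> H -> R[i]) (M : set H) : set H :=
  [set x | forall m, M m -> ip m x = 0].

(* lam is in the resolvent set of T|_N (N an is_invariant closed subspace):
   lam - T|_N has a bounded linear two-sided inverse on N. *)
Definition resolvent_on (N : set H) (T : H -> H) (lam : R[i]) : Prop :=
  exists S : H -> H,
    (forall x, N x -> N (S x)) /\
    [/\ forall x y, N x -> N y -> S (x + y) = S x + S y,
        forall (a : R[i]) x, N x -> S (a *: x) = a *: S x,
        (exists k : R[i], forall x, N x -> `|S x| <= k * `|x|),
        forall x, N x -> S (lam *: x - T x) = x
      & forall x, N x -> lam *: S x - T (S x) = x].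

Definition spectrum_on (N : set H) (T : H -> H) : set R[i] :=
  [set lam | ~ resolvent_on N T lam].

Definition compact_on (M : set H) (T : H -> H) : Prop :=
  compact (closure (T @` [set x | M x /\ `|x| <= 1])).

End Hilbert.

(* Main.v *)
Require Import Defs.
From HB Require Import structures.
From mathcomp Require Import all_boot all_order all_algebra.
From mathcomp Require Import complex.
From mathcomp Require Import all_classical all_reals all_analysis.
From mathcomp Require Import ring lra.
Set Implicit Arguments. Unset Strict Implicit. Unset Printing Implicit Defensive.
Import Order.TTheory GRing.Theory Num.Theory ComplexField.
Local Open Scope ring_scope.
Local Open Scope classical_set_scope.
Local Open Scope complex_scope.

Section Basics.
Variables (R : realType) (H : completeNormedModType R[i]).

Lemma cpx_real_ge0 (z : R[i]) : 0 <= z -> z = (complex.Re z)%:C.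
Proof. by move=> z0; rewrite RRe_real // ger0_real. Qed.

Definition nm (x : H) : R := complex.Re `|x|.

Lemma nmE x : `|x| = (nm x)%:C.
Proof. by rewrite /nm -cpx_real_ge0. Qed.

Lemma nm_ge0 x : 0 <= nm x.
Proof. by rewrite -ler0c -nmE. Qed.

Lemma nmD x y : nm (x + y) <= nm x + nm y.
Proof. by rewrite -lecR rmorphD /= -!nmE ler_normD. Qed.

Lemma nmN x : nm (- x) = nm x.
Proof. by rewrite /nm normrN. Qed.

Lemma nmB x y : nm (x - y) = nm (y - x).
Proof. by rewrite /nm distrC. Qed.

Lemma nm0 : nm 0 = 0.
Proof. by rewrite /nm normr0. Qed.

Lemma nm_eq0 x : (nm x = 0) -> x = 0.
Proof. by move=> h; apply/normr0_eq0; rewrite nmE h. Qed.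

Lemma nmZr (r : R) x : nm (r%:C *: x) = `|r| * nm x.
Proof.
apply: complexI; rewrite -nmE normrZ nmE rmorphM /=; congr (_ * _).
by rewrite normc_def /= expr0n /= addr0 sqrtr_sqr.
Qed.

Lemma nmZ (a : R[i]) x : nm (a *: x) = complex.Re `|a| * nm x.
Proof.
apply: complexI; rewrite -nmE normrZ nmE rmorphM /=; congr (_ * _).

Qed.

End Basics.

Section IP.
Variables (R : realType) (H : completeNormedModType R[i]) (ip : H -> H -> R[i]).
Hypothesis Hip : is_inner_product ip.

Lemma ipDZl a x y z : ip (a *: x + y) z = a * ip x z + ip y z.
Proof. by case: Hip. Qed.

Lemma ipC x y : ip y x = (ip x y)^*.
Proof. by case: Hip. Qed.

Lemma ipxx' x : ip x x = `|x| ^+ 2.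
Proof. by case: Hip. Qed.

Lemma ipxx x : ip x x = ((nm x) ^+ 2)%:C.
Proof. by rewrite ipxx' nmE rmorphXn. Qed.

Lemma ip0l z : ip 0 z = 0.
Proof.
have := ipDZl 1 0 0 z; rewrite scaler0 addr0 mul1r => /eqP.
by rewrite -subr_eq0 opprD addrA subrr sub0r oppr_eq0 => /eqP.
Qed.

Lemma ipDl x y z : ip (x + y) z = ip x z + ip y z.
Proof. by rewrite -[x]scale1r ipDZl mul1r scale1r. Qed.

Lemma ipZl a x z : ip (a *: x) z = a * ip x z.
Proof. by rewrite -[a *: x]addr0 ipDZl ip0l addr0. Qed.

Lemma ipNl x z : ip (- x) z = - ip x z.
Proof. by rewrite -scaleN1r ipZl mulN1r. Qed.

Lemma ipBl x y z : ip (x - y) z = ip x z - ip y z.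
Proof. by rewrite ipDl ipNl. Qed.

Lemma ip0r z : ip z 0 = 0.
Proof. by rewrite ipC ip0l conjc0. Qed.

Lemma ipDr x y z : ip z (x + y) = ip z x + ip z y.
Proof. by rewrite ipC ipDl rmorphD /= -!ipC. Qed.

Lemma ipZr a x z : ip z (a *: x) = a^* * ip z x.
Proof. by rewrite ipC ipZl rmorphM /= -ipC. Qed.

Lemma ipNr x z : ip z (- x) = - ip z x.
Proof. by rewrite -scaleN1r ipZr rmorphN rmorph1 mulN1r. Qed.

Lemma ipBr x y z : ip z (x - y) = ip z x - ip z y.
Proof. by rewrite ipDr ipNr. Qed.

Lemma ipxx_eq0 x : ip x x = 0 -> x = 0.
Proof.
rewrite ipxx => /complexI /eqP; rewrite sqrf_eq0 => /eqP; exact: nm_eq0.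
Qed.

End IP.
Lemma numconjE (R : realType) (z : R[i]) : Num.conj z = conjc z.
Proof. by []. Qed.

Section IP2.
Variables (R : realType) (H : completeNormedModType R[i]) (ip : H -> H -> R[i]).
Hypothesis Hip : is_inner_product ip.

Lemma ip_expand z y t : ip (z - t *: y) (z - t *: y) =
  ip z z - conjc t * ip z y - t * ip y z + t * conjc t * ip y y.
Proof.
rewrite (ipBl Hip) !(ipBr Hip) !(ipZl Hip) !(ipZr Hip); ring.
Qed.

Lemma ip_expand_opt z y : y != 0 ->
  ip (z - (ip z y / ip y y) *: y) (z - (ip z y / ip y y) *: y) =
  ip z z - ip z y * conjc (ip z y) / ip y y.
Proof.
move=> y0; have q0 : ip y y != 0 by apply/negP => /eqP /(ipxx_eq0 Hip) /eqP; rewrite (negbTE y0).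
rewrite ip_expand (ipC Hip z y) rmorphM /= fmorphV /= ?numconjE.
have -> : conjc (ip y y) = ip y y by rewrite (ipxx Hip) conjc_real.
field; exact: q0.
Qed.

Lemma ip_ge0 x : 0 <= ip x x.
Proof. by rewrite (ipxx Hip) ler0c sqr_ge0. Qed.

Lemma min_orth z y : (forall t, ip z z <= ip (z - t *: y) (z - t *: y)) -> ip z y = 0.
Proof.
move=> h; have [->|y0] := eqVneq y 0; first exact: (ip0r Hip).
have q0 : ip y y != 0 by apply/negP => /eqP /(ipxx_eq0 Hip) /eqP; rewrite (negbTE y0).
have := h (ip z y / ip y y); rewrite ip_expand_opt // -subr_ge0 addrAC subrr sub0r oppr_ge0 => h1.
have h2 : 0 <= ip z y * conjc (ip z y) / ip y y.
  by apply: divr_ge0; [exact: mulcJ_ge0 | exact: ip_ge0].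
have : ip z y * conjc (ip z y) / ip y y = 0 by apply/eqP; rewrite eq_le h1 h2.
move/eqP; rewrite mulf_eq0 invr_eq0 (negbTE q0) orbF mulf_eq0 conjc_eq0 orbb.
by move/eqP.
Qed.

Lemma CS z y : `|ip z y| <= (nm z * nm y)%:C.
Proof.
have [->|y0] := eqVneq y 0; first by rewrite (ip0r Hip) normr0 ler0c mulr_ge0 // nm_ge0.
have q0 : ip y y != 0 by apply/negP => /eqP /(ipxx_eq0 Hip) /eqP; rewrite (negbTE y0).
have h := ip_ge0 (z - (ip z y / ip y y) *: y); rewrite ip_expand_opt // subr_ge0 in h.
have qp : 0 < ip y y by rewrite lt_def q0 ip_ge0.
rewrite ler_pdivrMr // -sqr_normc in h.
rewrite -(@ler_pXn2r _ 2) //; last by rewrite nnegrE ler0c mulr_ge0 // nm_ge0.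
  by apply: (le_trans h); rewrite !(ipxx Hip) -rmorphM -rmorphXn /= exprMn.

Qed.

End IP2.
Section Topo.
Variables (R : realType) (H : completeNormedModType R[i]).

Lemma ball_nm (p a : H) (e : R) : ball p e%:C a <-> nm (p - a) < e.
Proof. by rewrite -ball_normE /= nmE ltcR. Qed.

Lemma closed_eps (A : set H) p : closed A ->
  (forall e : R, 0 < e -> exists a, A a /\ nm (p - a) < e) -> A p.
Proof.
move=> cA h; rewrite (closure_id A).1 //; move=> B /nbhs_ballP [e /= e0 eB].
have ep : 0 < complex.Re e by rewrite -ltcR -cpx_real_ge0 // ltW.
have [a [Aa pa]] := h _ ep; exists a; split => //; apply: eB.
by rewrite [e]cpx_real_ge0 ?ltW // ball_nm.
Qed.

Lemma eps_closed (A : set H) :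
  (forall p, (forall e : R, 0 < e -> exists a, A a /\ nm (p - a) < e) -> A p) -> closed A.
Proof.
move=> h; apply/closure_id; apply/seteqP; split; first exact: subset_closure.
move=> p cp; apply: h => e e0.
have [a [Aa /ball_nm pa]] := cp _ (nbhsx_ballx p e%:C ltac:(by rewrite ltcR)).
by exists a.
Qed.

Lemma complete_seq (u : nat -> H) :
  (forall e : R, 0 < e -> exists N, forall m n, (N <= m)%N -> (N <= n)%N -> nm (u m - u n) < e) ->
  exists l, forall e : R, 0 < e -> exists N, forall n, (N <= n)%N -> nm (l - u n) < e.
Proof.
move=> hc.
have cu : cauchy (u @ \oo).
  apply/cauchy_ballP => e e0.
  have ep : 0 < complex.Re e by rewrite -ltcR -cpx_real_ge0 // ltW.
  have [N hN] := hc _ ep.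
  exists (u @` [set n | (N <= n)%N], u @` [set n | (N <= n)%N]).
    by split; exists N => // n /= Nn; exists n.
  move=> [x y] [/= [m Nm <-] [n Nn <-]].
  by rewrite [e]cpx_real_ge0 ?ltW // ball_nm; apply: hN.
have [l hl] := (cvg_ex (u @ \oo)).1 (cauchy_cvg _ cu).
exists l => e e0.
have := (cvgrPdist_lt _ _).1 hl e%:C ltac:(by rewrite ltcR).
case => N _ hN; exists N => n Nn.
by have := hN n Nn; rewrite /= nmE ltcR.
Qed.

Lemma compact_cluster (Kc : set H) (y : nat -> H) : compact Kc ->
  (forall n, Kc (y n)) ->
  exists u, forall e : R, 0 < e -> forall N, exists n, (N <= n)%N /\ nm (u - y n) < e.
Proof.
move=> cK yK.
have Fy : (y @ \oo) Kc by exists 0%N => // n _; apply: yK.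
have [u [_ cu]] := cK (y @ \oo) _ Fy.
exists u => e e0 N.
have [z [[n Nn <-] /ball_nm ?]] := cu (y @` [set n | (N <= n)%N]) (ball u e%:C)
  ltac:(by exists N => // m /= Nm; exists m) (nbhsx_ballx u e%:C ltac:(by rewrite ltcR)).
by exists n.
Qed.

Lemma lin_bound (T : {linear H -> H}) : continuous T ->
  exists b : R, 0 < b /\ forall x, nm (T x) <= b * nm x.
Proof.
move=> cT.
have := (linear_boundedP T).1 ((linear_bounded_continuous T).2 cT).
case => M [Mr hM].
exists (`|complex.Re M| + 1); split; first by rewrite ltr_pwDr // normr_ge0.
move=> x; have := hM (`|complex.Re M| + 1)%:C.
have -> : M = (complex.Re M)%:C by rewrite RRe_real.
rewrite ltcR ltr_pwDr ?normr_ge0 ?real_ler_norm ?num_real //.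
by move=> /(_ isT x); rewrite !nmE -rmorphM lecR.
Qed.

End Topo.
Lemma archi_inv (R : realType) (g : R) : 0 < g ->
  exists N, forall n, (N <= n)%N -> n.+1%:R^-1 < g.
Proof.
move=> g0; exists (Num.trunc g^-1) => n Nn.
have h1 := truncnS_gt g^-1.
have h2 : g^-1 < n.+1%:R.
  by apply: (lt_le_trans h1); rewrite ler_nat ltnS.
by rewrite -ltf_pV2 ?invrK // posrE ?invr_gt0 // ltr0Sn.
Qed.

Section Proj.
Variables (R : realType) (H : completeNormedModType R[i]) (ip : H -> H -> R[i]).
Hypothesis Hip : is_inner_product ip.

Lemma para (a b : H) : nm (a + b) ^+ 2 + nm (a - b) ^+ 2 = 2 * nm a ^+ 2 + 2 * nm b ^+ 2.
Proof.
apply: complexI; rewrite !mulr_natl [LHS]rmorphD [RHS]rmorphD !rmorphMn /= -!(ipxx Hip).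
rewrite !(ipDl Hip) !(ipDr Hip) !(ipNl Hip) !(ipNr Hip); ring.
Qed.

Lemma subsp_facts (K : set H) : closed_subspace K ->
  [/\ K 0, forall x y, K x -> K y -> K (x + y), forall a x, K x -> K (a *: x),
      forall x, K x -> K (- x) & forall x y, K x -> K y -> K (x - y)].
Proof.
case=> _ K0 KD KZ; have KN : forall x, K x -> K (- x).
  by move=> x Kx; rewrite -scaleN1r; apply: KZ.
by split => // x y Kx Ky; apply: KD => //; apply: KN.
Qed.

Lemma proj (K : set H) : closed_subspace K -> forall x,
  exists k, K k /\ forall k', K k' -> ip k' (x - k) = 0.
Proof.
move=> Ks x; have [K0 KD KZ KN KB] := subsp_facts Ks; have cK : closed K by case: Ks.
pose E := [set r : R | exists k, K k /\ r = - nm (x - k)].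
have hs : has_sup E.
  split; first by exists (- nm (x - 0)); exists 0.
  by exists 0 => r [k [_ ->]]; rewrite oppr_le0 nm_ge0.
pose d := - sup E.
have dle : forall k, K k -> d <= nm (x - k).
  by move=> k Kk; rewrite /d lerNl; apply: ub_le_sup; [case: hs | exists k].
have d0 : 0 <= d.
  rewrite /d oppr_ge0; apply: ge_sup; first by case: hs.
  by move=> r [k [_ ->]]; rewrite oppr_le0 nm_ge0.
have hn : forall n : nat, exists k, K k /\ nm (x - k) < d + n.+1%:R^-1.
  move=> n; have h0 : 0 < n.+1%:R^-1 :> R by rewrite invr_gt0 ltr0Sn.
  have [r [k [Kk ->]] hr] := sup_adherent h0 hs.
  exists k; split => //; rewrite /d; move: hr; set t := n.+1%:R^-1; set s := sup E; lra.
have [ks hks] := choice hn.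
have cauchy_ks : forall e : R, 0 < e -> exists N, forall m n, (N <= m)%N -> (N <= n)%N -> nm (ks m - ks n) < e.
  move=> e e0.
  pose g := Num.min 1 (e ^+ 2 / (8 * d + 4)).
  have g0 : 0 < g by rewrite lt_min ltr01 /= divr_gt0 // ?exprn_gt0 //; lra.
  have [N hN] := archi_inv g0; exists N => m n Nm Nn.
  have [Km hm] := hks m; have [Kn hn'] := hks n.
  have em := hN _ Nm; have en := hN _ Nn.
  have g1 : g <= 1 by rewrite ge_min lexx.
  have g2 : g <= e ^+ 2 / (8 * d + 4) by rewrite ge_min lexx orbT.
  have g3 : g * (8 * d + 4) <= e ^+ 2 by rewrite -ler_pdivlMr //; lra.
  have hp := para (x - ks m) (x - ks n).
  have hmid : d <= nm (x - 2^-1%:C *: (ks m + ks n)) by apply: dle; apply: KZ; apply: KD.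
  have e1 : x - ks m + (x - ks n) = 2%:C *: (x - 2^-1%:C *: (ks m + ks n)).
    rewrite scalerBr scalerA -rmorphM /= mulfV ?pnatr_eq0 // scale1r.
    by rewrite -[2%:C]/((1 + 1)%:C) rmorphD /= rmorph1 scalerDl scale1r opprD addrACA.
  have e2 : x - ks m - (x - ks n) = ks n - ks m by rewrite opprB addrC addrA subrK.
  rewrite e1 e2 nmZr ger0_norm // in hp.
  set a := nm (x - ks m) in hp hm; set b := nm (x - ks n) in hp hn'.
  set c := nm (x - 2^-1%:C *: (ks m + ks n)) in hp hmid.
  have a0 : 0 <= a by apply: nm_ge0.
  have b0 : 0 <= b by apply: nm_ge0.
  have hsq : nm (ks n - ks m) ^+ 2 < e ^+ 2.
    have ag : a < d + g by move: hm em; set t := m.+1%:R^-1; lra.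
    have bg : b < d + g by move: hn' en; set t := n.+1%:R^-1; lra.
    have a2 : a ^+ 2 < (d + g) ^+ 2 by rewrite ltr_pXn2r // nnegrE; lra.
    have b2 : b ^+ 2 < (d + g) ^+ 2 by rewrite ltr_pXn2r // nnegrE; lra.
    have c2 : d ^+ 2 <= c ^+ 2 by rewrite ler_pXn2r // nnegrE; lra.
    have gg : g ^+ 2 <= g by rewrite expr2 ger_pMl //.
    move: hp; set X := nm (ks n - ks m) ^+ 2 => hp.
    have : X < 8 * d * g + 4 * g ^+ 2 by rewrite expr2 in a2 b2 c2 hp *; nra.
    rewrite expr2 in gg; nra.
  rewrite nmB; have := nm_ge0 (ks n - ks m); nra.
have [l hl] := complete_seq cauchy_ks.
have Kl : K l.
  apply: closed_eps => // e e0; have [N hN] := hl e e0.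
  by exists (ks N); split; [case: (hks N) | apply: hN].
have ld : nm (x - l) <= d.
  apply/ler_addgt0Pr => e e0.
  have e2 : 0 < e / 2 by rewrite divr_gt0.
  have [N1 h1] := hl _ e2; have [N2 h2] := archi_inv e2.
  pose n := maxn N1 N2.
  have A1 := h1 n (leq_maxl _ _); have A2 := h2 n (leq_maxr _ _).
  have [_ hk] := hks n.
  have tri := nmD (x - ks n) (ks n - l).
  rewrite [nm (ks n - l)]nmB in tri.
  have ee : x - ks n + (ks n - l) = x - l by rewrite addrA subrK.
  rewrite ee in tri.
  move: A2 hk; set t := n.+1%:R^-1; lra.
exists l; split => // k' Kk'.
have h : ip (x - l) k' = 0.
  apply: (min_orth Hip) => t.
  rewrite !(ipxx Hip) lecR.
  have -> : x - l - t *: k' = x - (l + t *: k') by rewrite opprD addrA.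
  have := dle _ (KD _ _ Kl (KZ t _ Kk')).
  have := nm_ge0 (x - l); have := nm_ge0 (x - (l + t *: k')); nra.
by rewrite (ipC Hip) h conjc0.
Qed.

End Proj.
Lemma zmod_id1 (V : zmodType) (a c d e : V) : a - c - (d - e) + (c - e) = a - d.
Proof. by rewrite addrACA subrK opprB addrAC subrr sub0r. Qed.

Section Eigen.
Variables (R : realType) (H : completeNormedModType R[i]) (ip : H -> H -> R[i]).
Hypothesis Hip : is_inner_product ip.

Lemma small_le0 (X C : R) : 0 < C -> (forall eta : R, 0 < eta -> X < C * eta) -> X <= 0.
Proof.
move=> C0 h; apply/ler_addgt0Pr => e e0; rewrite add0r.
have := h (e / C) (divr_gt0 e0 C0); rewrite mulrC divfK ?gt_eqF //; exact: ltW.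
Qed.

Lemma eigen (M N : set H) (B : {linear H -> H}) :
  continuous B -> self_adjoint ip B -> closed_subspace N -> N `<=` M ->
  is_invariant N B ->
  compact (closure (B @` [set x | M x /\ `|x| <= 1])) ->
  (exists v0, N v0 /\ v0 <> 0) ->
  exists v (lam : R[i]), [/\ N v, v <> 0 & B v = lam *: v].
Proof.
move=> cB sB Ns NM NB cK [v0 [Nv0 v00]].
have [N0 ND NZ NN NBB] := subsp_facts Ns; have cN : closed N by case: Ns.
have [b [b0 hb]] := lin_bound cB.
pose S := [set r : R | exists w, N w /\ nm w <= 1 /\ r = nm (B w)].
have S0 : S 0 by exists 0; split => //; rewrite linear0 nm0; split => //; exact: ler01.
have hs : has_sup S.
  split; first by exists 0.
  exists b => r [w [_ [w1 ->]]]; apply: (le_trans (hb w)).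
  by rewrite -[X in _ <= X]mulr1 ler_pM2l.
pose s := sup S.
have s0 : 0 <= s by apply: ub_le_sup => //; case: hs.
have F1 : forall w, N w -> nm (B w) <= s * nm w.
  move=> w Nw; have [->|w0] := eqVneq w 0; first by rewrite linear0 !nm0 mulr0.
  have r0 : 0 < nm w.
    by rewrite lt_def nm_ge0 andbT; apply/negP => /eqP /nm_eq0 /eqP; rewrite (negbTE w0).
  have : S (nm (B ((nm w)^-1%:C *: w))).
    exists ((nm w)^-1%:C *: w); split; first exact: NZ.
    by rewrite nmZr ger0_norm ?invr_ge0 ?nm_ge0 // mulVf ?gt_eqF.
  move/(ub_le_sup (proj2 hs)); rewrite linearZ /= nmZr ger0_norm ?invr_ge0 ?nm_ge0 //.
  by rewrite mulrC ler_pdivrMr // mulrC.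
have [s00|sp] := eqVneq s 0.
  exists v0, 0; split => //; rewrite scale0r; apply: nm_eq0; apply/eqP.
  by rewrite eq_le nm_ge0 andbT; have := F1 _ Nv0; rewrite s00 mul0r.
have {sp} sp : 0 < s by rewrite lt_def sp s0.
have hn : forall n : nat, exists w, N w /\ nm w <= 1 /\ s - n.+1%:R^-1 < nm (B w).
  move=> n; have h0 : 0 < n.+1%:R^-1 :> R by rewrite invr_gt0 ltr0Sn.
  have [r [w [Nw [w1 ->]]] hr] := sup_adherent h0 hs.
  by exists w.
have [vs hvs] := choice hn.
have yK : forall n, closure (B @` [set x | M x /\ `|x| <= 1]) (B (vs n)).
  move=> n; apply: subset_closure; exists (vs n) => //; have [Nv [v1 _]] := hvs n.
  by split; [apply: NM | rewrite nmE lecR].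
have [u hu] := compact_cluster cK yK.
have Nu : N u.
  apply: closed_eps => // e e0; have [n [_ hn']] := hu e e0 0%N.
  by exists (B (vs n)); split => //; apply: NB; case: (hvs n).
pose r n := B (B (vs n)) - (s ^+ 2)%:C *: vs n.
have rbound : forall n, nm (r n) ^+ 2 <= 2 * s ^+ 3 * n.+1%:R^-1.
  move=> n; have [Nv [v1 hv]] := hvs n.
  have e1 : nm (r n) ^+ 2 = nm (B (B (vs n))) ^+ 2 - 2 * s ^+ 2 * nm (B (vs n)) ^+ 2
      + s ^+ 4 * nm (vs n) ^+ 2.
    apply: complexI; rewrite -(ipxx Hip) /r (ipBl Hip) !(ipBr Hip) !(ipZl Hip) !(ipZr Hip).
    rewrite (sB (B (vs n)) (vs n)) -(sB (vs n) (B (vs n))) ?numconjE conjc_real !(ipxx Hip).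
    rewrite !rmorphD !rmorphN !rmorphM /= ?rmorph_nat.
    ring.
  have Y1 := F1 _ Nv; have Y2 := F1 _ (NB _ Nv).
  rewrite e1; move: hv Y1 Y2.
  set t := n.+1%:R^-1; set Y := nm (B (vs n)); set Z := nm (B (B (vs n))); set V := nm (vs n).
  move=> hv Y1 Y2.
  have V0 : 0 <= V := nm_ge0 _.
  have Y0 : 0 <= Y := nm_ge0 _.
  have Z0 : 0 <= Z := nm_ge0 _.
  have YS : Y <= s by apply: (le_trans Y1); rewrite ler_piMr.
  have Z2 : Z ^+ 2 <= s ^+ 2 * Y ^+ 2 by rewrite -exprMn ler_pXn2r // nnegrE ?mulr_ge0.
  have V2 : V ^+ 2 <= 1 by rewrite -(expr1n _ 2) ler_pXn2r // nnegrE.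
  have st : s - Y <= t by lra.
  have t0 : 0 < t by rewrite invr_gt0 ltr0Sn.
  have h1 : s ^+ 2 - Y ^+ 2 <= 2 * s * t by rewrite !expr2; nra.
  have h2 : s ^+ 4 * V ^+ 2 <= s ^+ 4 by rewrite ger_pMr // exprn_gt0.
  have h3 : s ^+ 2 * (s ^+ 2 - Y ^+ 2) <= s ^+ 2 * (2 * s * t) by rewrite ler_pM2l // exprn_gt0.
  have e3 : s ^+ 3 = s ^+ 2 * s by rewrite exprSr.
  have e4 : s ^+ 4 = s ^+ 2 * s ^+ 2 by rewrite -exprD.
  rewrite e3 e4 in h2 *; move: h3 Z2; set s2 := s ^+ 2; set Y2' := Y ^+ 2 => h3 Z2'.
  nra.
have key : forall eta : R, 0 < eta -> exists n,
    [/\ nm (u - B (vs n)) < eta, n.+1%:R^-1 < eta & nm (r n) < eta].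
  move=> eta e0.
  pose g := Num.min eta (eta ^+ 2 / (2 * s ^+ 3 + 1)).
  have c0 : 0 < s ^+ 3 by rewrite exprn_gt0.
  have g0 : 0 < g by rewrite lt_min e0 /= divr_gt0 ?exprn_gt0 //; lra.
  have [M0 hN0] := archi_inv g0.
  have [n [Nn hun]] := hu eta e0 M0.
  have tn := hN0 n Nn.
  have g1 : g <= eta by rewrite ge_min lexx.
  have g2 : g <= eta ^+ 2 / (2 * s ^+ 3 + 1) by rewrite ge_min lexx orbT.
  have g3 : g * (2 * s ^+ 3 + 1) <= eta ^+ 2 by rewrite -ler_pdivlMr //; lra.
  have rb := rbound n.
  exists n; split => //; first exact: (lt_le_trans tn g1).
  have : nm (r n) ^+ 2 < eta ^+ 2.
    move: rb tn g3; set t := n.+1%:R^-1; set c := s ^+ 3 => rb tn g3.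
    have ct : c * t < c * g by rewrite ltr_pM2l.
    have gc : g * (2 * c + 1) = 2 * (c * g) + g by ring.
    lra.
  by rewrite ltr_pXn2r // nnegrE ?nm_ge0 ?ltW.
have BBu : B (B u) = (s ^+ 2)%:C *: u.
  apply/eqP; rewrite -subr_eq0; apply/eqP; apply: nm_eq0; apply/eqP.
  rewrite eq_le nm_ge0 andbT.
  have C0 : 0 < b ^+ 2 + s ^+ 2 + b by rewrite addr_gt0 // addr_gt0 // exprn_gt0.
  apply: (small_le0 C0) => eta e0.
  have [n [h1 h2 h3]] := key eta e0.
  have ide : B (B u) - (s ^+ 2)%:C *: u =
     B (B (u - B (vs n))) - (s ^+ 2)%:C *: (u - B (vs n)) + B (r n).
    have e1 : B (r n) = B (B (B (vs n))) - (s ^+ 2)%:C *: B (vs n).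
      by rewrite /r linearB linearZ.
    have e2 : B (B (u - B (vs n))) = B (B u) - B (B (B (vs n))).
      by rewrite linearB linearB.
    by rewrite e1 e2 scalerBr zmod_id1.
  rewrite ide.
  have n1 := nmD (B (B (u - B (vs n))) - (s ^+ 2)%:C *: (u - B (vs n))) (B (r n)).
  have n2 := nmD (B (B (u - B (vs n)))) (- ((s ^+ 2)%:C *: (u - B (vs n)))).
  rewrite nmN nmZr ger0_norm ?exprn_ge0 // in n2.
  have n3 := hb (B (u - B (vs n))); have n4 := hb (u - B (vs n)); have n5 := hb (r n).
  move: n1 n2 n3 n4 n5 h1 h3.
  set X := nm (u - B (vs n)); set Y := nm (r n); set Z := nm (B (u - B (vs n))).
  set W := nm (B (B (u - B (vs n)))); set V := nm (B (r n)).
  set T := nm (_ + B (r n)); set T2 := nm (_ - _).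
  move=> n1 n2 n3 n4 n5 h1 h3.
  have X0 : 0 <= X := nm_ge0 _.
  have Y0 : 0 <= Y := nm_ge0 _.
  nra.
have u0 : u <> 0.
  move=> u0; have s4 : 0 < s / 4 by rewrite divr_gt0.
  have [n [h1 h2 _]] := key _ s4.
  have [_ [_ hv]] := hvs n.
  move: h1 h2 hv; rewrite u0 sub0r nmN; set t := n.+1%:R^-1; lra.
pose w := B u + s%:C *: u.
have Nw : N w by apply: ND; [apply: NB | apply: NZ].
have [w0|w0] := eqVneq w 0.
  exists u, (- s%:C); split => //.
  by apply/eqP; rewrite scaleNr -subr_eq0 opprK -/w w0.
exists w, s%:C; split => //; first by apply/eqP.
rewrite /w linearD linearZ /= BBu scalerDr scalerA -rmorphM /= expr2 addrC.
done.
Qed.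

End Eigen.
Lemma zmod_id2 (V : zmodType) (a b c d : V) : (a - b) - (c - d) = (a - c) - (b - d).
Proof. by rewrite !opprB addrACA [RHS]addrACA [- c - b]addrC. Qed.

Lemma resolvent0 (R : realType) (H : completeNormedModType R[i]) (N : set H) (S : H -> H) :
  N 0 -> (forall x y, N x -> N y -> S (x + y) = S x + S y) -> S 0 = 0.
Proof.
move=> N0 SD; have := SD 0 0 N0 N0; rewrite addr0 => /eqP.
by rewrite -subr_eq0 opprD addrA subrr sub0r oppr_eq0 => /eqP.
Qed.


Theorem lemma2p2 (R : realType) (H : completeNormedModType R[i])
  (ip : H -> H -> R[i]) (A B C D : {linear H -> H}) (M : set H) :
  is_inner_product ip ->
  bounded_op A -> bounded_op B -> bounded_op C -> bounded_op D ->
  self_adjoint ip A -> self_adjoint ip B ->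
  closed_subspace M ->
  is_invariant M A -> is_invariant M B -> is_invariant M C ->
  spectrum_on (orth ip M) A `&` spectrum_on M B = set0 ->
  compact_on M B ->
  (forall x, A (D x) - D (B x) = C x) ->
  is_invariant M D.
Proof.
move=> Hip cA cB cC cD sA sB Ms MA MB MC hspec cBc hD.
have [M0 MD MZ MN MBB] := subsp_facts Ms; have cM : closed M by case: Ms.
have [bd [bd0 hbd]] := lin_bound cD.
pose K := [set v | M v /\ M (D v)].
have Ks : closed_subspace K.
  split.
  - apply: eps_closed => p hp; split.
      by apply: closed_eps => // e e0; have [a [[Ma _] ha]] := hp e e0; exists a.
    apply: closed_eps => // e e0.
    have [a [[_ MDa] ha]] := hp (e / bd) (divr_gt0 e0 bd0).
    exists (D a); split => //; rewrite -linearB.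
    apply: (le_lt_trans (hbd _)); rewrite mulrC -ltr_pdivlMr //.
  - by split => //; rewrite linear0.
  - by move=> x y [Mx MDx] [My MDy]; split; [apply: MD | rewrite linearD; apply: MD].
  - by move=> a x [Mx MDx]; split; [apply: MZ | rewrite linearZ; apply: MZ].
have [K0 KD KZ KN KB] := subsp_facts Ks.
have KBi : forall v, K v -> K (B v).
  move=> v [Mv MDv]; split; first exact: MB.
  have -> : D (B v) = A (D v) - C v by rewrite -hD opprB addrC subrK.
  by apply: MBB; [apply: MA | apply: MC].
move=> x Mx; apply: contrapT => nDx.
have [k [Kk hk]] := proj Hip Ks x.
pose N := [set v | M v /\ forall k, K k -> ip k v = 0].
have Ns : closed_subspace N.
  split.
  - apply: eps_closed => p hp; split.
      by apply: closed_eps => // e e0; have [a [[Ma _] ha]] := hp e e0; exists a.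
    move=> k' Kk'.
    have h0 : complex.Re `|ip k' p| <= 0.
      apply: (@small_le0 _ _ (nm k' + 1)); first by have := nm_ge0 k'; lra.
      move=> eta e0; have [a [[_ ha] hpa]] := hp eta e0.
      have : `|ip k' p| <= (nm k' * nm (p - a))%:C.
        have -> : ip k' p = ip k' (p - a) by rewrite (ipBr Hip) ha // subr0.
        exact: (CS Hip).
      rewrite [`|ip k' p|]cpx_real_ge0 // lecR => h.
      have := nm_ge0 k'; have := nm_ge0 (p - a); nra.
    apply/normr0_eq0; rewrite [`|ip k' p|]cpx_real_ge0 //.
    suff -> : complex.Re `|ip k' p| = 0 by [].
    by apply/eqP; rewrite eq_le h0 -ler0c -cpx_real_ge0 ?normr_ge0.
  - by split => // k' _; rewrite (ip0r Hip).
  - move=> y z [My hy] [Mz hz]; split; first exact: MD.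
    by move=> k' Kk'; rewrite (ipDr Hip) hy // hz // addr0.
  - move=> a y [My hy]; split; first exact: MZ.
    by move=> k' Kk'; rewrite (ipZr Hip) hy // mulr0.
have NM : N `<=` M by move=> v [].
have NB : is_invariant N B.
  move=> v [Mv hv]; split; first exact: MB.
  by move=> k' Kk'; rewrite -sB hv //; apply: KBi.
have Nz : N (x - k) by split; [apply: MBB => //; case: Kk | exact: hk].
have z0 : x - k <> 0.
  move=> /eqP; rewrite subr_eq0 => /eqP xk; apply: nDx; rewrite xk; by case: Kk.
have [v [lam [Nv v0 Bv]]] := eigen Hip cB sB Ns NM NB cBc (ex_intro _ (x - k) (conj Nz z0)).
have Mv : M v by apply: NM.
have spB : spectrum_on M B lam.
  move=> [S [_ [SD _ _ SL _]]]; apply: v0.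
  have := SL v Mv; rewrite Bv subrr => <-; exact: (resolvent0 M0 SD).
have : resolvent_on (orth ip M) A lam.
  apply: contrapT => nres.
  have : (spectrum_on (orth ip M) A `&` spectrum_on M B) lam by split.
  by rewrite hspec.
move=> [S [_ [SD _ _ SL _]]].
have O0 : orth ip M 0 by move=> m' _; rewrite (ip0r Hip).
have [m [Mm hm]] := proj Hip Ms (D v).
pose w := D v - m.
have Ow : orth ip M w by move=> m' Mm'; apply: hm.
have OAw : orth ip M (A w) by move=> m' Mm'; rewrite -sA; apply: hm; apply: MA.
have e1 : A (D v) - lam *: D v = C v.
  have lz : D (lam *: v) = lam *: D v by rewrite linearZ.
  by rewrite -hD Bv lz.
have e2 : A w - lam *: w = C v - (A m - lam *: m).
  by rewrite /w linearB scalerBr zmod_id2 e1.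
have Mu : M (A w - lam *: w).
  rewrite e2; apply: (MBB); first exact: MC.
  by apply: (MBB); [apply: MA | apply: MZ].
have Ou : orth ip M (A w - lam *: w).
  by move=> m' Mm'; rewrite (ipBr Hip) (ipZr Hip) OAw // Ow // mulr0 subrr.
have u0 : A w - lam *: w = 0 by apply: (ipxx_eq0 Hip); apply: Ou.
have w0 : w = 0.
  have := SL w Ow; rewrite -opprB u0 oppr0 => <-; exact: (resolvent0 O0 SD).
have MDv : M (D v).
  have -> : D v = m + w by rewrite /w addrCA subrr addr0.
  by rewrite w0 addr0.
have Kv : K v by split.
have [_ hv] := Nv.
by apply: v0; apply: (ipxx_eq0 Hip); apply: hv.
Qed.
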